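(* Let $B,n'\ge1$ be integers, $n=2Bn'$, $s\ge0$, and let $f:\{0,1\}^{n'}\to\{\pm\tfrac12\}$ be a balanced function with $I(f)\le s$. Let $W=\mathrm{Span}\{f_z : z\in\{0,1\}^B\}\subseteq\mathbb{C}^{2^n}$ with $f_z$ as defined below. Then for every $\phi\in W$, $$2^{n-1}I(\phi)\le 2s\,|\phi^*\phi|.$$
   Context: A function $g:\{0,1\}^m\to\mathbb{C}$ is identified with the vector $\sum_x g(x)|x\rangle\in\mathbb{C}^{2^m}$. For $g:\{0,1\}^m\to\mathbb{C}$ and $i\in[m]$, $I_i(g)=\mathbb{E}_{x\in\{0,1\}^m}|g(x)-g(x\oplus e_i)|^2$ and $I(g)=\max_i I_i(g)$. Balanced means $f$ takes each value on exactly half the inputs. Partition $[n]$ into $2B$ consecutive blocks of length $n'$; for $x\in\{0,1\}^n$, $i\in[B]$, $b\in\{0,1\}$, $x_{i,b}\in\{0,1\}^{n'}$ is the restriction of $x$ to the $(2i-1+b)$-th block. For $z\in\{0,1\}^B$, $f_z(x)=f(x_{1,z_1})\cdots f(x_{B,z_B})$. *)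

(* Defs.v *)
(* Complex scalars: an arbitrary numClosedFieldType C
   (e.g. the complex numbers), which contains the genuine case C = complex. *)
From mathcomp Require Import all_boot all_order all_algebra.
From mathcomp Require Import zify.
Set Implicit Arguments. Unset Strict Implicit. Unset Printing Implicit Defensive.
Import Order.TTheory GRing.Theory Num.Theory.
Local Open Scope ring_scope.

Notation cube m := {ffun 'I_m -> bool}.

Definition flip (m : nat) (x : cube m) (i : 'I_m) : cube m :=
  [ffun j => x j (+) (j == i)].

Section Influence.
Variable C : numClosedFieldType.

Definition Infl_i (m : nat) (g : cube m -> C) (i : 'I_m) : C :=
  (2 ^+ m)^-1 * \sum_(x : cube m) `|g x - g (flip x i)| ^+ 2.

(* I(g) = max_i I_i(g)  (all I_i(g) are real and >= 0, so 0 is a neutral default) *)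
Definition Infl (m : nat) (g : cube m -> C) : C :=
  \big[Num.max/0]_(i < m) Infl_i g i.

Definition sqnorm (m : nat) (g : cube m -> C) : C :=
  \sum_(x : cube m) Num.conj (g x) * g x.

Definition balanced (m : nat) (f : cube m -> C) : Prop :=
  (2 * #|[set x | f x == 1/2]| = 2 ^ m)%N /\
  (2 * #|[set x | f x == -(1/2)]| = 2 ^ m)%N.

End Influence.

Lemma blk_ltn (B n' : nat) (i : 'I_B) (b : bool) (j : 'I_n') :
  ((2 * i + b) * n' + j < 2 * B * n')%N.
Proof.
have hi := ltn_ord i; have hj := ltn_ord j.
have hb : (b <= 1)%N by case: b.
have h1 : ((2 * i + b).+1 <= 2 * B)%N by lia.
have h2 : ((2 * i + b).+1 * n' <= 2 * B * n')%N by rewrite leq_mul2r h1 orbT.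
rewrite mulSn in h2; lia.
Qed.

(* x_{i,b}: restriction of x to the (2i-1+b)-th block (1-based i), i.e. the
   block with 0-based index 2i+b for 0-based i : 'I_B *)
Definition restr (B n' : nat) (x : cube (2 * B * n')) (i : 'I_B) (b : bool)
  : cube n' := [ffun j => x (Ordinal (blk_ltn i b j))].

Definition fz (C : numClosedFieldType) (B n' : nat) (f : cube n' -> C)
  (z : cube B) (x : cube (2 * B * n')) : C :=
  \prod_(i < B) f (restr x i (z i)).

Definition inW (C : numClosedFieldType) (B n' : nat) (f : cube n' -> C)
  (phi : cube (2 * B * n') -> C) : Prop :=
  exists c : cube B -> C, forall x, phi x = \sum_(z : cube B) c z * fz f z x.

(* Main.v *)
Require Import Defs.
From mathcomp Require Import all_boot all_order all_algebra.
From mathcomp Require Import zify ring.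
Set Implicit Arguments. Unset Strict Implicit. Unset Printing Implicit Defensive.
Import Order.TTheory GRing.Theory Num.Theory.
Local Open Scope ring_scope.

Definition xorc m (x w : cube m) : cube m := [ffun t => x t (+) w t].

Definition emb B n' (k : 'I_B) (b : bool) (y : cube n') : cube (2 * B * n') :=
  [ffun t => [exists j : 'I_n', (val t == ((2 * k + b) * n' + j)%N) && y j]].

Lemma xorcK m (w : cube m) : cancel (fun x => xorc x w) (fun x => xorc x w).
Proof. by move=> x; apply/ffunP => t; rewrite !ffunE addbK. Qed.

Lemma xorcK' m (w : cube m) : cancel (xorc w) (xorc w).
Proof. by move=> x; apply/ffunP => t; rewrite !ffunE addKb. Qed.

Lemma blk_inj (n' q1 q2 j1 j2 : nat) :
  (q1 * n' + j1 = q2 * n' + j2)%N -> (j1 < n')%N -> (j2 < n')%N -> q1 = q2 /\ j1 = j2.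
Proof.
move=> e h1 h2; have n0 : (0 < n')%N by lia.
have := congr1 (divn^~ n') e; rewrite !divnMDl // !divn_small // !addn0 => eq.
by split => //; move: e; rewrite eq => /addnI.
Qed.

Lemma emb_on B n' (k : 'I_B) b (y : cube n') j :
  emb k b y (Ordinal (blk_ltn k b j)) = y j.
Proof.
rewrite ffunE /=; apply/existsP/idP => [[j' /andP[/eqP e yj]]|yj].
  have [_ ej] := blk_inj e (ltn_ord j) (ltn_ord j').
  by have -> : j = j' by apply: val_inj.
by exists j; rewrite eqxx.
Qed.

Lemma emb_off B n' (k i : 'I_B) b c (y : cube n') j :
  (i != k) || (c != b) -> emb k b y (Ordinal (blk_ltn i c j)) = false.
Proof.
move=> h; rewrite ffunE /=; apply/existsP => [[j' /andP[/eqP e _]]].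
have [e1 _] := blk_inj e (ltn_ord j) (ltn_ord j').
move: h; have : i = k :> nat by case: c b e1 {e} => [] []; lia.
move=> /val_inj ->; rewrite eqxx /=.
by case: c b e1 {e} => [] [] //=; lia.
Qed.

Lemma restr_xor B n' (k : 'I_B) b (y : cube n') x :
  restr (xorc x (emb k b y)) k b = xorc (restr x k b) y.
Proof. by apply/ffunP => j; rewrite [LHS]ffunE [LHS]ffunE emb_on !ffunE. Qed.

Lemma restr_xor_off B n' (k i : 'I_B) b c (y : cube n') x :
  (i != k) || (c != b) -> restr (xorc x (emb k b y)) i c = restr x i c.
Proof. by move=> h; apply/ffunP => j; rewrite [LHS]ffunE [LHS]ffunE emb_off // addbF ffunE. Qed.

Lemma decomp_idx B n' (i : 'I_(2 * B * n')) :
  exists k b j, i = Ordinal (@blk_ltn B n' k b j).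
Proof.
have n0 : (0 < n')%N.
  have := ltn_ord i; move: (nat_of_ord i) => m.
  rewrite lt0n; apply: contraTneq => ->; by rewrite muln0.
have hq : (i %/ n' < 2 * B)%N by rewrite ltn_divLR.
have hk : ((i %/ n')./2 < B)%N.
  by have := odd_double_half (i %/ n'); rewrite -muln2; lia.
exists (Ordinal hk), (odd (i %/ n')), (Ordinal (ltn_pmod i n0)).
apply: val_inj => /=.
have e := odd_double_half (i %/ n'); rewrite -muln2 in e.
have -> : (2 * (i %/ n')./2 + odd (i %/ n') = i %/ n')%N by lia.
by rewrite -divn_eq.
Qed.

Definition ej n' (j : 'I_n') : cube n' := [ffun t => t == j].

Lemma flip_xor B n' (k : 'I_B) b (j : 'I_n') x :
  flip x (Ordinal (blk_ltn k b j)) = xorc x (emb k b (ej j)).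
Proof.
apply/ffunP => t; rewrite !ffunE; congr (_ (+) _).
apply/eqP/existsP => [->|[j' /andP[/eqP e]]]; first by exists j; rewrite !ffunE !eqxx.
rewrite ffunE => /eqP ej'; subst j'; exact: val_inj.
Qed.

Lemma xor_ej n' (y : cube n') j : xorc y (ej j) = flip y j.
Proof. by apply/ffunP => t; rewrite !ffunE. Qed.

Definition indep (C : numClosedFieldType) B n' (k : 'I_B) (b : bool)
  (g : cube (2 * B * n') -> C) := forall x y, g (xorc x (emb k b y)) = g x.

Lemma sum_factor (C : numClosedFieldType) B n' (k : 'I_B) b (a : cube n' -> C) g :
  indep k b g ->
  2 ^+ n' * \sum_x a (restr x k b) * g x = (\sum_y a y) * \sum_x g x.
Proof.
move=> hg.
have card : #|{: cube n'}| = (2 ^ n')%N by rewrite card_ffun card_bool card_ord.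
transitivity (\sum_(y : cube n') \sum_x a (restr x k b) * g x).
  by rewrite sumr_const card -[RHS]mulr_natl natrX.
transitivity (\sum_(y : cube n') \sum_x a (xorc (restr x k b) y) * g x).
  apply: eq_bigr => y _.
  rewrite (reindex_inj (can_inj (xorcK (emb k b y)))) /=.
  by under eq_bigr do rewrite restr_xor hg.
rewrite exchange_big /= mulr_sumr; apply: eq_bigr => x _.
rewrite -mulr_suml; congr (_ * _).
by rewrite [RHS](reindex_inj (can_inj (xorcK' (restr x k b)))).
Qed.

Lemma le_max_real (C : numClosedFieldType) (x y : C) :
  x \is Num.real -> y \is Num.real -> y <= Num.max x y.
Proof.
move=> xr yr; rewrite maxEle; case: ifP => // /negbT.
by rewrite -real_ltNge // => /ltW.
Qed.

Lemma le_bigmax_real (C : numClosedFieldType) m (F : 'I_m -> C) i :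
  (forall j, F j \is Num.real) -> F i <= \big[Num.max/0]_(j < m) F j.
Proof.
move=> hr.
suff : forall r : seq 'I_m, i \in r -> F i <= \big[Num.max/0]_(j <- r) F j.
  by apply; rewrite mem_index_enum.
elim=> //= a r IH; rewrite in_cons big_cons => /orP[/eqP->|/IH h].
  by rewrite maxEle; case: ifP.
apply: (le_trans h); apply: le_max_real => //.
by apply: bigmax_real => // j _.
Qed.

Lemma Infl_i_ge0 (C : numClosedFieldType) m (g : cube m -> C) i : 0 <= Infl_i g i.
Proof.
rewrite /Infl_i mulr_ge0 // ?invr_ge0 ?exprn_ge0 ?ler0n //.
by apply: sumr_ge0 => x _; rewrite exprn_ge0.
Qed.

Lemma Infl_bigP (C : numClosedFieldType) m (g : cube m -> C) (P : C -> Prop) :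
  P 0 -> (forall i, P (Infl_i g i)) -> P (Infl g).
Proof.
move=> P0 Pi; rewrite /Infl; elim/big_ind: _ => // x y Px Py.
by rewrite maxEle; case: ifP.
Qed.

Lemma sum_f0 (C : numClosedFieldType) n' (f : cube n' -> C) :
  (forall x, f x = 1/2 \/ f x = -(1/2)) -> balanced f -> \sum_y f y = 0.
Proof.
move=> fpm [bA bB].
have h2 : (0 : C) < 1/2 by rewrite divr_gt0 // ltr0n.
have hn : (-(1/2) : C) < 0 by rewrite oppr_lt0.
have hne := lt_eqF (lt_trans hn h2).
set A := [set x | f x == 1/2] in bA *; set Bs := [set x | f x == -(1/2)] in bB *.
transitivity (\sum_y ((if y \in A then 1/2 else 0 : C) + (if y \in Bs then -(1/2) else 0 : C))).
  apply: eq_bigr => y _; rewrite !inE; case: (fpm y) => ->.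
    by rewrite eqxx eq_sym hne addr0.
  by rewrite hne eqxx add0r.
rewrite big_split /= -!big_mkcond /= !sumr_const.
have -> : #|Bs| = #|A| by lia.
by rewrite mulNrn subrr.
Qed.
Unset Implicit Arguments.

Theorem lemma2 (C : numClosedFieldType) (B n' : nat) (s : C)
  (f : cube n' -> C) :
  (0 < B)%N -> (0 < n')%N -> 0 <= s ->
  (forall x, f x = 1/2 \/ f x = -(1/2)) ->
  balanced f ->
  Infl f <= s ->
  forall phi : cube (2 * B * n') -> C, inW f phi ->
  2 ^+ (2 * B * n').-1 * Infl phi <= 2 * s * `|sqnorm phi|.
Proof.
move=> B0 n0 s0 fpm bal Hf phi [c hphi].
have fR : forall y, f y \is Num.real.
  by move=> y; case: (fpm y) => ->; rewrite ?rpredN rpred_div ?rpred1 ?rpred_nat.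
have fC : forall y, (f y)^* = f y by move=> y; apply/eqP; rewrite -CrealE.
have fsq : forall y, f y ^+ 2 = (1/2) ^+ 2 by move=> y; case: (fpm y) => ->; rewrite ?sqrrN.
have If : forall j, Infl_i f j <= s.
  move=> j; apply: le_trans Hf; apply: le_bigmax_real => l.
  exact: ger0_real (Infl_i_ge0 _ _).
have sq0 : 0 <= sqnorm phi.
  by apply: sumr_ge0 => x _; rewrite -normCKC exprn_ge0.
have RHS0 : 0 <= 2 * s * `|sqnorm phi| by rewrite !mulr_ge0 ?ler0n.
apply: (Infl_bigP (P := fun v => 2 ^+ (2 * B * n').-1 * v <= 2 * s * `|sqnorm phi|)); first by rewrite mulr0.
move=> i.
have [k [b [j ->]]] := decomp_idx i.
pose G (x : cube (2 * B * n')) := \sum_(z : cube B | z k == b) c z * \prod_(l | l != k) f (restr x l (z l)).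
pose H (x : cube (2 * B * n')) := \sum_(z : cube B | z k != b) c z * fz f z x.
have hdec : forall x, phi x = f (restr x k b) * G x + H x.
  move=> x; rewrite hphi (bigID (fun z : cube B => z k == b)) /=; congr (_ + _).
  rewrite mulr_sumr; apply: eq_bigr => z /eqP zk.
  by rewrite /fz (bigD1 k) //= zk mulrCA.
have hG : indep k b G.
  move=> x y; rewrite /G; apply: eq_bigr => z _; congr (_ * _).
  by apply: eq_bigr => l lk; rewrite restr_xor_off // lk.
have hH : indep k b H.
  move=> x y; rewrite /H; apply: eq_bigr => z zk; congr (_ * _).
  rewrite /fz; apply: eq_bigr => l _.
  case lk: (l == k); last by rewrite restr_xor_off // lk.
  by move/eqP: lk => ->; rewrite restr_xor_off // zk orbT.
set i0 := Ordinal (blk_ltn k b j).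
have hG2 : indep k b (fun x => `|G x| ^+ 2) by move=> x y /=; rewrite hG.
have p2 : forall m, (2 : C) ^+ m != 0 by move=> m; rewrite expf_neq0 // pnatr_eq0.
have e_flip : forall x, phi x - phi (flip x i0) =
    (f (restr x k b) - f (flip (restr x k b) j)) * G x.
  by move=> x; rewrite /i0 flip_xor !hdec restr_xor xor_ej hG hH; ring.
set SG := \sum_x `|G x| ^+ 2.
set SH := \sum_x `|H x| ^+ 2.
have SG0 : 0 <= SG by apply: sumr_ge0 => x _; rewrite exprn_ge0.
have SH0 : 0 <= SH by apply: sumr_ge0 => x _; rewrite exprn_ge0.
have sumD : \sum_x `|phi x - phi (flip x i0)| ^+ 2 = Infl_i f j * SG.
  have e1 : \sum_x `|phi x - phi (flip x i0)| ^+ 2 =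
      \sum_x (fun y => `|f y - f (flip y j)| ^+ 2) (restr x k b) * `|G x| ^+ 2.
    by apply: eq_bigr => x _; rewrite e_flip normrM exprMn.
  apply: (mulfI (p2 n')); rewrite e1 (sum_factor (fun y => `|f y - f (flip y j)| ^+ 2) hG2) /= /Infl_i.
  by rewrite !mulrA mulfV ?p2 // mul1r.
have sqE : sqnorm phi = (1/2) ^+ 2 * SG + SH.
  rewrite /sqnorm.
  transitivity (\sum_x ((1/2) ^+ 2 * `|G x| ^+ 2 +
     f (restr x k b) * ((G x)^* * H x + (H x)^* * G x) + `|H x| ^+ 2)).
    apply: eq_bigr => x _; rewrite hdec rmorphD /= rmorphM /= fC !normCKC.
    rewrite -(fsq (restr x k b)); ring.
  rewrite !big_split /= -mulr_sumr.
  have -> : \sum_x f (restr x k b) * ((G x)^* * H x + (H x)^* * G x) = 0.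
    have hw : indep k b (fun x => (G x)^* * H x + (H x)^* * G x).
      by move=> x y /=; rewrite hG hH.
    apply: (mulfI (p2 n')); rewrite mulr0 (sum_factor f hw).
    by rewrite sum_f0 // mul0r.
  by rewrite addr0.
rewrite /Infl_i sumD (ger0_norm sq0) sqE.
have N0 : (0 < 2 * B * n')%N by rewrite !muln_gt0 B0 n0.
have e2 : (2 : C) ^+ (2 * B * n') = 2 * 2 ^+ (2 * B * n').-1.
  by rewrite -exprS prednK.
rewrite e2.
have -> : 2 ^+ (2 * B * n').-1 * ((2 * 2 ^+ (2 * B * n').-1)^-1 * (Infl_i f j * SG))
    = (1/2) * (Infl_i f j * SG) :> C.
  by field; rewrite p2.
apply: (@le_trans _ _ ((1/2) * (s * SG))).
  by rewrite ler_wpM2l ?ler_wpM2r ?If // divr_ge0 ?ler0n.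
have -> : (1/2) * (s * SG) = 2 * s * ((1/2) ^+ 2 * SG) :> C by field.
by rewrite ler_wpM2l ?mulr_ge0 ?ler0n // lerDl.
Qed.
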